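(* Let $l\ge2$ be odd and let $a,b\in\{1,\dots,l-1\}$ be such that $X=X(\mathbb{Z}_{2l},\{\pm a,\pm b\})$ is a connected $4$-regular circulant graph with $a+b\ne l$. Then $X$ does not admit perfect state transfer between (distinct) vertex type states.
   Context: $X(\mathbb{Z}_n,S)$ (with $S\subseteq\mathbb{Z}_n\setminus\{0\}$, $S=-S$) has vertex set $\mathbb{Z}_n$ and edges $\{x,y\}$ with $y-x\in S$. For a graph with symmetric arc set $\mathcal{A}$ ($t((x,y))=y$, $(x,y)^{-1}=(y,x)$): boundary matrix $d_{x,a}=\frac{1}{\sqrt{\deg x}}\delta_{x,t(a)}$, shift matrix $R_{a,b}=\delta_{a,b^{-1}}$, $U=R(2d^*d-I_{\mathcal{A}})$. Perfect state transfer between vertex type states means $U^\tau d^*e_x=\gamma d^*e_y$ for some distinct vertices $x,y$, some $\tau\in\mathbb{Z}_{\ge1}$ and some $|\gamma|=1$ ($e_x$ the standard unit vector). *)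

(* Defs.v *)
From mathcomp Require Import all_boot all_order all_algebra all_field.
Set Implicit Arguments. Unset Strict Implicit. Unset Printing Implicit Defensive.
Import Order.TTheory GRing.Theory Num.Theory.
Local Open Scope ring_scope.

Section QWalk.
Variables (T : finType) (e : rel T).

Definition arc := {p : T * T | e p.1 p.2}.

Definition head_of (a : arc) : T := (val a).2.
Definition tail_of (a : arc) : T := (val a).1.

Definition deg (x : T) : nat := #|[set y | e x y]|.

Definition bdry (x : T) (a : arc) : algC :=
  if x == head_of a then (sqrtC (deg x)%:R)^-1 else 0.

Definition shift (a b : arc) : algC :=
  if (val a == (head_of b, tail_of b)) then 1 else 0.

Definition dstar_d (a b : arc) : algC := \sum_(x : T) (bdry x a)^* * bdry x b.

Definition Umat (a b : arc) : algC :=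
  \sum_(c : arc) shift a c * (2 * dstar_d c b - (c == b)%:R).

Definition Uapply (v : arc -> algC) : arc -> algC :=
  fun a => \sum_(b : arc) Umat a b * v b.
Definition Upow (n : nat) (v : arc -> algC) : arc -> algC := iter n Uapply v.

Definition vstate (x : T) : arc -> algC := fun a => (bdry x a)^*.

Definition PST_vertex : Prop :=
  exists x y : T, x != y /\
  exists tau : nat, (1 <= tau)%N /\
  exists gamma : algC, `|gamma| = 1 /\
    forall a : arc, Upow tau (vstate x) a = gamma * vstate y a.

End QWalk.

Definition circ_rel (n : nat) (S : {set 'Z_n}) : rel 'Z_n :=
  fun x y => (y - x) \in S.

Definition graph_connected (T : finType) (e : rel T) : Prop :=
  forall x y : T, connect e x y.

Definition regular (T : finType) (e : rel T) (k : nat) : Prop :=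
  forall x : T, deg e x = k.

(* Main.v *)
Require Import Defs.
From mathcomp Require Import all_boot all_order all_algebra all_field.
From mathcomp Require Import ring lra zify.
Set Implicit Arguments. Unset Strict Implicit. Unset Printing Implicit Defensive.
Import Order.TTheory GRing.Theory Num.Theory.
Local Open Scope ring_scope.

Fixpoint qpair (t : nat) : {poly algC} * {poly algC} :=
  if t is t'.+1 then ('X * (qpair t').1 - (qpair t').2, (qpair t').1)
  else (2%:P, 'X).
Definition qq t := (qpair t).1.
Definition hq t := (qpair t).2.

Lemma qqS t : qq t.+1 = 'X * qq t - hq t. Proof. by []. Qed.
Lemma hqS t : hq t.+1 = qq t. Proof. by []. Qed.


Notation pZ := (polyOver (Num.int : {pred algC})).
Lemma pO_B (p q : {poly algC}) : p \is a polyOver Num.int -> q \is a polyOver Num.int ->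
  p - q \is a polyOver Num.int.
Proof.
move=> /polyOverP hp /polyOverP hq; apply/polyOverP => i; rewrite coefB; exact: rpredB.
Qed.
Lemma pO_M (p q : {poly algC}) : p \is a polyOver Num.int -> q \is a polyOver Num.int ->
  p * q \is a polyOver Num.int.
Proof.
move=> /polyOverP hp /polyOverP hq; apply/polyOverP => i; rewrite coefM.
by apply: rpred_sum => j _; apply: rpredM.
Qed.
Lemma pO_X : ('X : {poly algC}) \is a polyOver Num.int.
Proof. exact: polyOverX. Qed.
Lemma pO_C (c : algC) : c \in Num.int -> c%:P \is a polyOver Num.int.
Proof. by rewrite polyOverC. Qed.
Lemma pO_exp (p : {poly algC}) n : p \is a polyOver Num.int -> p ^+ n \is a polyOver Num.int.
Proof.
move=> hp; elim: n => [|n IH]; first by rewrite expr0 -[1]/(1%:P) pO_C ?rpred1.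
by rewrite exprS pO_M.
Qed.

Lemma q_int t : qq t \is a polyOver Num.int /\ hq t \is a polyOver Num.int.
Proof.
elim: t => [|t [h1 h2]]; first by rewrite /qq /hq /= polyOverC polyOverX rpred_nat.
split; rewrite ?hqS //; rewrite qqS; apply: pO_B => //; apply: pO_M => //; exact: pO_X.
Qed.

Lemma qq1 : qq 1 = 'X.
Proof. by rewrite qqS /qq /hq /= polyC_natr mulr_natr mulr2n addrK. Qed.

Lemma q_size t : (1 <= t)%N ->
  [/\ size (qq t) = t.+1, lead_coef (qq t) = 1 & (size (hq t) <= t)%N].
Proof.
elim: t => [//|t IH _].
case: t IH => [_|t IH].
  by rewrite qq1 size_polyX lead_coefX /hq /= size_polyC; case: (_ != _).
have [s1 l1 s2] := IH isT.
have nz : qq t.+1 != 0 by rewrite -size_poly_eq0 s1.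
have sX : size ('X * qq t.+1) = t.+3 by rewrite mulrC size_mulX // s1.
have lt : (size (- hq t.+1) < size ('X * qq t.+1)%R)%N.
  rewrite size_polyN sX; apply: leq_ltn_trans s2 _; lia.
split; rewrite ?hqS ?s1 //.
  by rewrite qqS size_polyDl.
by rewrite qqS lead_coefDl // mulrC lead_coefMX.
Qed.

Lemma q_at2 t : (qq t).[2] = 2 /\ (hq t).[2] = 2.
Proof.
elim: t => [|t [h1 h2]]; first by rewrite /qq /hq /= hornerC hornerX.
rewrite qqS hqS !hornerE h1 h2; split => //; by rewrite mulr_natl mulr2n addrK.
Qed.

Section Gen.
Variables (T : finType) (e : rel T).
Hypothesis esym : forall x y, e x y = e y x.
Hypothesis reg4 : forall x, deg e x = 4%N.

Local Notation arc := (Defs.arc e).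

Lemma revP (a : arc) : e (val a).2 (val a).1.
Proof. by rewrite esym; exact: (valP a). Qed.

Definition rev (a : arc) : arc := exist (fun p : T * T => e p.1 p.2) ((val a).2, (val a).1) (revP a).

Lemma revK : involutive rev.
Proof. by move=> a; apply: val_inj; case: a => [[x y] h]. Qed.

Lemma head_rev a : head_of (rev a) = tail_of a. Proof. by []. Qed.
Lemma tail_rev a : tail_of (rev a) = head_of a. Proof. by []. Qed.

Lemma sum_rev (F : arc -> algC) : \sum_a F (rev a) = \sum_a F a.
Proof. by rewrite [RHS](reindex_inj (inv_inj revK)). Qed.

Lemma sum_arc (F : T * T -> algC) :
  \sum_(a : arc) F (val a) = \sum_(p | e p.1 p.2) F p.
Proof.
rewrite (reindex_omap (val : arc -> T * T) insub); last first.
  by move=> p Hp; rewrite insubT.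
by apply: eq_bigl => -[p hp] /=; rewrite insubT hp /= eqxx.
Qed.

Lemma sum_tail (f : T -> algC) v :
  \sum_(a : arc) (tail_of a == v)%:R * f (head_of a) = \sum_(y | e v y) f y.
Proof.
rewrite (sum_arc (fun p => (p.1 == v)%:R * f p.2)).
rewrite -(pair_big_dep xpredT (fun x y => e x y) (fun x y => (x == v)%:R * f y)) /=.
rewrite (bigD1 v) //= [X in _ + X]big1 ?addr0; first by apply: eq_bigr => y _; rewrite eqxx mul1r.
by move=> u /negbTE nu; apply: big1 => y _; rewrite nu mul0r.
Qed.

Lemma sum_head (f : T -> algC) v :
  \sum_(a : arc) (head_of a == v)%:R * f (tail_of a) = \sum_(y | e v y) f y.
Proof. by rewrite -(sum_rev (fun a => (head_of a == v)%:R * f (tail_of a))) sum_tail. Qed.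

Lemma deg_sum v : \sum_(y | e v y) (1 : algC) = 4.
Proof.
by rewrite sumr_const -(reg4 v) /deg cardsE.
Qed.


Lemma cnt_tail v : \sum_(a : arc) (tail_of a == v)%:R = 4 :> algC.
Proof.
rewrite -(deg_sum v) -(sum_tail (fun _ => 1)); apply: eq_bigr => a _; by rewrite mulr1.
Qed.

Lemma sqrt4 : sqrtC 4 = 2 :> algC.
Proof. have -> : (4:algC) = 2^+2 by rewrite expr2 -natrM.
by rewrite sqrCK ?ler0n. Qed.

Lemma bdryE x (a : arc) : bdry x a = 2^-1 * (x == head_of a)%:R.
Proof. by rewrite /bdry reg4 sqrt4; case: eqP => _; rewrite ?mulr1 ?mulr0. Qed.

Lemma vstateE x (a : arc) : vstate x a = 2^-1 * (x == head_of a)%:R.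
Proof. by rewrite /vstate bdryE rmorphM /= fmorphV /= !conjC_nat. Qed.

Lemma dstarE (c b : arc) : dstar_d c b = 4^-1 * (head_of c == head_of b)%:R.
Proof.
rewrite /dstar_d (bigD1 (head_of c)) //= big1 ?addr0; last first.
  by move=> x /negbTE nx; rewrite !bdryE nx mulr0 rmorph0 mul0r.
rewrite !bdryE eqxx mulr1 fmorphV /= conjC_nat.
have -> : (4:algC) = 2 * 2 by rewrite -natrM.
by rewrite invfM mulrA.
Qed.

Lemma shiftE (a c : arc) : shift a c = (c == rev a)%:R.
Proof.
rewrite /shift /head_of /tail_of /rev; case: a c => [[x y] ha] [[u v] hc] /=.
rewrite -[X in nat_of_bool X]val_eqE /= !xpair_eqE [u == y]eq_sym [v == x]eq_sym.
by rewrite andbC; case: (_ && _).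
Qed.

Lemma UmatE (a b : arc) :
  Umat a b = 2^-1 * (tail_of a == head_of b)%:R - (rev a == b)%:R.
Proof.
rewrite /Umat (bigD1 (rev a)) //= big1 ?addr0; last first.
  by move=> c /negbTE nc; rewrite shiftE nc mul0r.
rewrite shiftE eqxx mul1r dstarE head_rev mulrA.
have -> : (2:algC) * 4^-1 = 2^-1.
  have -> : (4:algC) = 2 * 2 by rewrite -natrM.
  by rewrite invfM mulrA divff ?mul1r // pnatr_eq0.
by [].
Qed.

Lemma UapplyE (psi : arc -> algC) a :
  Uapply psi a = 2^-1 * \sum_b (tail_of a == head_of b)%:R * psi b - psi (rev a).
Proof.
rewrite /Uapply; under eq_bigr do rewrite UmatE mulrBl.
rewrite sumrB mulr_sumr; congr (_ - _); first by apply: eq_bigr => b _; rewrite mulrA.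
rewrite (bigD1 (rev a)) //= big1 ?addr0 ?eqxx ?mul1r //.
by move=> c /negbTE nc; rewrite eq_sym nc mul0r.
Qed.

Section Chi.
Variables (chi : T -> algC) (sigma : algC).
Hypothesis hchi : forall v, \sum_(y | e v y) chi y = sigma * chi v.

Definition Phin (psi : arc -> algC) := \sum_(a : arc) psi a * chi (head_of a).
Definition Phout (psi : arc -> algC) := \sum_(a : arc) psi a * chi (tail_of a).

Lemma double_sum (G K : arc -> algC) :
  \sum_(a : arc) (\sum_(b : arc) (tail_of a == head_of b)%:R * G b) * K a =
  \sum_(b : arc) G b * \sum_(a : arc) (tail_of a == head_of b)%:R * K a.
Proof.
under eq_bigr do rewrite mulr_suml.
rewrite exchange_big /=; apply: eq_bigr => b _; rewrite mulr_sumr.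
by apply: eq_bigr => a _; rewrite mulrCA mulrA.
Qed.

Lemma Phout_U psi : Phout (Uapply psi) = Phin psi.
Proof.
rewrite /Phout; under eq_bigr do rewrite UapplyE mulrBl -mulrA.
rewrite sumrB -mulr_sumr double_sum.
have -> : \sum_(a : arc) psi (rev a) * chi (tail_of a) = Phin psi.
  by rewrite /Phin -[RHS]sum_rev.
have -> : \sum_(b : arc) psi b * \sum_(a : arc) (tail_of a == head_of b)%:R * chi (tail_of a)
          = 4 * Phin psi.
  rewrite /Phin mulr_sumr; apply: eq_bigr => b _.
  have -> : \sum_(a : arc) (tail_of a == head_of b)%:R * chi (tail_of a)
            = \sum_(a : arc) (tail_of a == head_of b)%:R * chi (head_of b).
    by apply: eq_bigr => a _; case: eqP => [->|]; rewrite ?mul0r.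
  by rewrite -mulr_suml cnt_tail; ring.
rewrite mulrA; have -> : (2:algC)^-1 * 4 = 2.
  have -> : (4:algC) = 2 * 2 by rewrite -natrM.
  by rewrite mulKf // pnatr_eq0.
by rewrite mulr2n mulrDl mul1r addrK.
Qed.

Lemma Phin_U psi : Phin (Uapply psi) = sigma / 2 * Phin psi - Phout psi.
Proof.
rewrite /Phin; under eq_bigr do rewrite UapplyE mulrBl -mulrA.
rewrite sumrB -mulr_sumr double_sum.
have -> : \sum_(a : arc) psi (rev a) * chi (head_of a) = Phout psi.
  by rewrite /Phout -[RHS]sum_rev.
congr (_ - _); rewrite /Phin mulr_sumr mulr_sumr; apply: eq_bigr => b _.
rewrite (sum_tail chi (head_of b)) hchi; ring.
Qed.

Lemma Phin_v x : Phin (vstate x) = 2 * chi x.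
Proof.
rewrite /Phin; under eq_bigr do rewrite vstateE.
have -> : \sum_(a : arc) 2^-1 * (x == head_of a)%:R * chi (head_of a)
          = 2^-1 * chi x * \sum_(a : arc) (head_of a == x)%:R.
  rewrite mulr_sumr; apply: eq_bigr => a _; rewrite eq_sym.
  by case: eqP => [->|]; rewrite ?mulr0 ?mul0r ?mulr1.
have -> : \sum_(a : arc) (head_of a == x)%:R = 4 :> algC.
  by rewrite -(cnt_tail x) -sum_rev.
have -> : (4:algC) = 2 * 2 by rewrite -natrM.
by rewrite mulrAC mulrA mulVf ?pnatr_eq0 // mul1r mulrC.
Qed.

Lemma Phout_v x : Phout (vstate x) = sigma / 2 * chi x.
Proof.
rewrite /Phout; under eq_bigr do rewrite vstateE.
rewrite mulrAC -hchi -(sum_head chi x) mulr_suml.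
by apply: eq_bigr => a _; rewrite eq_sym; ring.
Qed.


Lemma Phi_iter x t :
  Phin (Upow t (vstate x)) = (qq t).[sigma/2] * chi x /\
  Phout (Upow t (vstate x)) = (hq t).[sigma/2] * chi x.
Proof.
elim: t => [|t [h1 h2]]; first by rewrite /Upow /= Phin_v Phout_v /qq /hq /= hornerC hornerX.
change (Upow t.+1 (vstate x)) with (Uapply (Upow t (vstate (e:=e) x))).
rewrite Phin_U Phout_U h1 h2 qqS hqS !hornerE; split => //; rewrite mulrBl; congr (_ - _).
Qed.

End Chi.

Lemma PST_cons : PST_vertex e -> exists x y tau, (1 <= tau)%N /\
  forall chi sigma, (forall v, \sum_(y | e v y) chi y = sigma * chi v) ->
    (qq tau).[sigma/2] * chi x = 2 * chi y.
Proof.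
case=> x [y [_ [tau [ht [g [_ H]]]]]].
have key : forall chi sigma, (forall v, \sum_(y | e v y) chi y = sigma * chi v) ->
    (qq tau).[sigma/2] * chi x = g * (2 * chi y).
  move=> chi sigma hchi; have [<- _] := Phi_iter hchi x tau.
  rewrite -(Phin_v chi y) /Phin mulr_sumr; apply: eq_bigr => a _; by rewrite H mulrA.
have two_nz : (2:algC) != 0 by rewrite pnatr_eq0.
have g1 : g = 1.
  have hc : forall v, \sum_(y | e v y) (fun _ : T => 1:algC) y = 4 * (fun _ => 1) v.
    by move=> v; rewrite mulr1 deg_sum.
  have := key _ _ hc.
  have -> : (4:algC)/2 = 2.
    have -> : (4:algC) = 2 * 2 by rewrite -natrM.
    by rewrite mulfK.
  rewrite (q_at2 tau).1 !mulr1 -{1}[2]mul1r.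
  by move/(mulIf two_nz).
exists x, y, tau; split=> // chi sigma hchi; by rewrite (key _ _ hchi) g1 mul1r.
Qed.

End Gen.

Lemma unit_1plus (th : algC) l : odd l -> (0 < l)%N -> th ^+ l = 1 -> th != 1 ->
  exists2 w, w \in Aint & (1 + th) * w = 1.
Proof.
move=> ol l0 thl th1.
set k := (l./2).+1.
exists (\sum_(i < k) (th ^+ 2) ^+ i).
  apply: rpred_sum => i _; apply: rpredX; apply: rpredX.
  by apply: (Aint_unity_root l0); rewrite unity_rootE thl.
have e2k : (2 * k = l.+1)%N.
  by rewrite /k -{2}(odd_double_half l) ol -muln2; lia.
have := subrX1 (th ^+ 2) k.
rewrite -exprM e2k exprS thl mulr1 subr_sqr_1 -mulrA.
have nz : th - 1 != 0 by rewrite subr_eq0.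
rewrite -{1}[th - 1]mulr1 => /(mulfI nz) H.
by rewrite [1 + th]addrC -H.
Qed.

Lemma half_not_Aint : (2:algC)^-1 \notin Aint.
Proof.
apply/negP => h.
have hi : (2:algC)^-1 \in Num.int.
  apply: Cint_rat_Aint h; by rewrite rpredV rpred_nat.
have := norm_intr_ge1 hi; rewrite invr_eq0 pnatr_eq0 => /(_ isT).
rewrite ger0_norm ?invr_ge0 ?ler0n // invf_ge1 ?ltr0n //.
have h12 : (1:algC) < 2 by rewrite ltr1n.
by move=> h2; move: (le_lt_trans h2 h12); rewrite ltxx.
Qed.

Lemma key_alg l (eta : algC) a b u' v' : odd l -> (0 < l)%N -> l.-primitive_root eta ->
  (0 < a < l)%N -> (0 < b < l)%N -> a != b -> (a + b != l)%N ->
  u' * eta ^+ a = 1 -> v' * eta ^+ b = 1 ->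
  (eta ^+ a + u' + eta ^+ b + v') / 2 \notin Aint.
Proof.
move=> ol l0 pr ha hb neab nel hu hv.
set u := eta ^+ a in hu *; set v := eta ^+ b in hv *.
have el : eta ^+ l = 1 by apply: prim_expr_order.
have ul : u ^+ l = 1 by rewrite /u exprAC el expr1n.
have vl : v ^+ l = 1 by rewrite /v exprAC el expr1n.
have u'l : u' ^+ l = 1 by rewrite -[u' ^+ l]mulr1 -ul -exprMn hu expr1n.
have unz : u != 0 by apply/eqP => u0; move: hu; rewrite u0 mulr0 => /eqP; rewrite eq_sym oner_eq0.
set th1 := v * u'; set th2 := u * v.
have th1l : th1 ^+ l = 1 by rewrite exprMn vl u'l mulr1.
have th2l : th2 ^+ l = 1 by rewrite exprMn vl ul mulr1.
have th1n : th1 != 1.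
  apply/eqP => h1.
  have : v = u by rewrite -[v]mulr1 -hu mulrA -/th1 h1 mul1r.
  move/eqP; rewrite /u /v (eq_prim_root_expr pr) => /eqP.
  rewrite !modn_small; lia.
have th2n : th2 != 1.
  apply/eqP => h2.
  have : eta ^+ (a + b) = eta ^+ 0 by rewrite exprD expr0 -/u -/v -/th2 h2.
  move/eqP; rewrite (eq_prim_root_expr pr) mod0n => /eqP /eqP.
  rewrite -/(dvdn l (a + b)) => dv.
  have [k hk] : exists k, (a + b = k * l)%N by exists ((a + b) %/ l)%N; rewrite (divnK dv).
  have k1 : k = 1%N by nia.
  by move: nel; rewrite hk k1 mul1n eqxx.
have [w1 w1A hw1] := unit_1plus ol l0 th1l th1n.
have [w2 w2A hw2] := unit_1plus ol l0 th2l th2n.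
set sig := u + u' + v + v'.
have E : u * v * sig = u * (1 + th1) * (1 + th2).
  apply/eqP; rewrite -subr_eq0.
  have -> : u * v * sig - u * (1 + th1) * (1 + th2)
      = (1 - u' * u) * (u * v ^+ 2) + (v' * v - 1) * u.
    by rewrite /sig /th1 /th2; ring.
  by rewrite mulrC hu mulrC hv subrr !mul0r addr0.
have E2 : v * sig * w1 * w2 = 1.
  apply: (mulfI unz); rewrite mulr1.
  have -> : u * (v * sig * w1 * w2) = (u * v * sig) * w1 * w2 by ring.
  rewrite E.
  have -> : u * (1 + th1) * (1 + th2) * w1 * w2 = u * ((1 + th1) * w1) * ((1 + th2) * w2) by ring.
  by rewrite hw1 hw2 !mulr1.
apply/negP => hA.
have : (2:algC)^-1 = v * (sig / 2) * w1 * w2.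
  by rewrite -[LHS]mul1r -E2; ring.
move=> h; move: half_not_Aint; rewrite h => /negP; apply.
apply: rpredM => //; apply: rpredM => //; apply: rpredM => //.
by rewrite /v; apply: rpredX; apply: Aint_prim_root pr.
Qed.

Theorem theorem9p17 (l a b : nat) :
  (2 <= l)%N -> odd l ->
  (1 <= a <= l.-1)%N -> (1 <= b <= l.-1)%N ->
  let S : {set 'Z_(l.*2)} := [set (a%:R : 'Z_(l.*2)); - a%:R; b%:R; - b%:R] in
  graph_connected (circ_rel S) ->
  regular (circ_rel S) 4 ->
  (a + b != l)%N ->
  ~ PST_vertex (circ_rel S).
Proof.
move=> hl ol ha hb S _ hreg hab hpst.
have l0 : (0 < l)%N by lia.
have n1 : (1 < l.*2)%N by rewrite -muln2; lia.
have [eta pr] := C_prim_root_exists l0.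
have hN : (Zp_trunc l.*2).+2 = l.*2 := Zp_cast n1.
have etaN : eta ^+ (Zp_trunc l.*2).+2 = 1.
  by rewrite hN -muln2 exprM (prim_expr_order pr) expr1n.
pose chi (z : 'Z_(l.*2)) := eta ^+ (nat_of_ord z).
have chiD : forall z w, chi (z + w) = chi z * chi w.
  move=> z w; rewrite /chi -exprD.
  change (nat_of_ord (z + w)) with ((nat_of_ord z + nat_of_ord w) %% (Zp_trunc l.*2).+2)%N.
  by rewrite expr_mod.
have chi0 : chi 0 = 1 by rewrite /chi expr0.
have chin : forall k, chi k%:R = eta ^+ k.
  by move=> k; rewrite /chi val_Zp_nat // -hN expr_mod.
set A1 : 'Z_(l.*2) := a%:R; set A3 : 'Z_(l.*2) := b%:R.
have Sneg : forall s, (- s \in S) = (s \in S).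
  move=> s; rewrite !inE !eqr_oppLR !opprK.
  by do 4!case: (s == _).
have esym : forall x y, circ_rel S x y = circ_rel S y x.
  by move=> x y; rewrite /circ_rel -opprB Sneg.
have cardS : #|S| = 4%N.
  have -> : S = [set y | circ_rel S 0 y] by apply/setP => y; rewrite [in RHS]inE /circ_rel subr0.
  exact: hreg.
have Seq : S = A1 |: (- A1 |: (A3 |: [set - A3])).
  apply/setP => z; rewrite !inE; by do 4!case: (z == _).
have cnt := cardS; rewrite Seq !cardsU1 cards1 in cnt.
have [d1 d2 d3] : [/\ A1 \notin - A1 |: (A3 |: [set - A3]),
    - A1 \notin A3 |: [set - A3] & A3 \notin [set - A3]].
  by move: cnt; case: (A1 \in _); case: (- A1 \in _); case: (A3 \in _).
have neab : a != b.
  apply/eqP => eab; move: d1; by rewrite !inE /A1 /A3 eab eqxx !orbT.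
set sigma := \sum_(s in S) chi s.
have sigE : sigma = chi A1 + (chi (- A1) + (chi A3 + chi (- A3))).
  by rewrite /sigma Seq big_setU1 //= big_setU1 //= big_setU1 //= big_set1.
have hchi : forall v, \sum_(y | circ_rel S v y) chi y = sigma * chi v.
  move=> v; rewrite (reindex_inj (addrI v)) /=.
  rewrite (eq_bigl (fun s => s \in S)) => [|s]; last by rewrite /circ_rel [v + s]addrC addrK.
  under eq_bigr do rewrite chiD.
  by rewrite -mulr_sumr mulrC.
have [x [y [tau [ht H]]]] := PST_cons esym hreg hpst.
have HH := H chi sigma hchi.
have chil : forall z, chi z ^+ l = 1.
  by move=> z; rewrite /chi exprAC (prim_expr_order pr) expr1n.
have [qs ql _] := q_size ht.
have qmon : qq tau \is monic by rewrite monicE ql.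
have muA : sigma / 2 \in Aint.
  apply: (@root_monic_Aint (qq tau ^+ l - (2 ^+ l)%:P)).
  - rewrite /root !hornerE.
    have : ((qq tau).[sigma / 2] * chi x) ^+ l = (2 * chi y) ^+ l by rewrite HH.
    by rewrite !exprMn !chil !mulr1 => ->; rewrite subrr.
  - rewrite monicE lead_coefDl; first by rewrite -monicE monic_exp.
    rewrite size_polyN; apply: (leq_ltn_trans (size_polyC_leq1 _)).
    have := size_exp (qq tau) l; rewrite qs /=.
    have : (qq tau ^+ l) != 0 by apply: monic_neq0; rewrite monic_exp.
    rewrite -size_poly_eq0; move: (size _) => m; nia.
  - apply: pO_B; first exact: pO_exp (q_int tau).1.
    by apply: pO_C; apply: rpredX; apply: rpred_nat.
have hu : chi (- A1) * eta ^+ a = 1 by rewrite -chin -chiD addNr chi0.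
have hv : chi (- A3) * eta ^+ b = 1 by rewrite -chin -chiD addNr chi0.
have ha' : (0 < a < l)%N by lia.
have hb' : (0 < b < l)%N by lia.
have := key_alg ol l0 pr ha' hb' neab hab hu hv.
rewrite sigE !addrA /A1 /A3 !chin in muA.
by rewrite muA.
Qed.
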